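(* Let $p$ be an odd prime. For every simple rank $3$ $\mathbb{Z}_p$-invariant matroid structure on $\mathbb{Z}_p$ there exists a distinct difference system $S_1,\ldots,S_k$ in $\mathbb{Z}_p$ such that the bases of the matroid are exactly the $3$-element subsets of $\mathbb{Z}_p$ which are not a translate of a subset of any $S_i$.
   Context: For an abelian group $A$, subsets $S_1,\ldots,S_k \subseteq A$ form a distinct difference system if: (i) for any $i,j$ and any $x,y \in S_i$, $z,w \in S_j$ with $x \neq y$ and $z \neq w$, the equation $x-y=z-w$ implies $x=z$ and $y=w$; (ii) each $S_i$ contains $0$ and at least one other element; (iii) $S_i \cap S_j = \{0\}$ for $i \neq j$. $\mathbb{Z}_p$ acts on itself by translation; a matroid on $\mathbb{Z}_p$ is $\mathbb{Z}_p$-invariant if translates of bases are bases. A matroid is simple if every circuit has at least three elements. A translate of a set $T$ is a set $\{t+a : t \in T\}$. *)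

(* Defs.v *)
From HB Require Import structures.
From mathcomp Require Import all_boot all_order all_algebra.
Set Implicit Arguments. Unset Strict Implicit. Unset Printing Implicit Defensive.
Import GRing.Theory.
Local Open Scope ring_scope.

Section Defs.
Variable T : finZmodType.

Definition translate (T0 : {set T}) (a : T) : {set T} := [set t + a | t in T0].

Definition is_matroid_bases (B : {set {set T}}) : Prop :=
  B != set0 /\
  forall B1 B2, B1 \in B -> B2 \in B -> forall x, x \in B1 :\: B2 ->
    exists2 y, y \in B2 :\: B1 & (B1 :\ x) :|: [set y] \in B.

Definition independent (B : {set {set T}}) (X : {set T}) : Prop :=
  exists2 Bs, Bs \in B & X \subset Bs.

Definition circuit (B : {set {set T}}) (C : {set T}) : Prop :=
  ~ independent B C /\ forall D : {set T}, D \proper C -> independent B D.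

Definition simple_matroid (B : {set {set T}}) : Prop :=
  forall C, circuit B C -> (3 <= #|C|)%N.

Definition rank3 (B : {set {set T}}) : Prop :=
  forall Bs, Bs \in B -> #|Bs| = 3%N.

Definition translation_invariant (B : {set {set T}}) : Prop :=
  forall Bs a, Bs \in B -> translate Bs a \in B.

Definition distinct_difference_system (k : nat) (S : 'I_k -> {set T}) : Prop :=
  [/\ (forall i j x y z w, x \in S i -> y \in S i -> z \in S j -> w \in S j ->
        x != y -> z != w -> x - y = z - w -> x = z /\ y = w),
      (forall i, 0 \in S i /\ exists2 x, x \in S i & x != 0)
    & (forall i j, i != j -> S i :&: S j = [set 0])].
End Defs.

(* Submission.v *)
Require Import Defs.
From mathcomp Require Import all_boot all_order all_algebra.
Set Implicit Arguments. Unset Strict Implicit. Unset Printing Implicit Defensive.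
Import GRing.Theory.


Section Gen.
Variable T : finZmodType.
Local Open Scope ring_scope.

Lemma mem_translate (X : {set T}) t x : (x \in translate X t) = (x - t \in X).
Proof.
apply/imsetP/idP => [[y yX ->]|h]; first by rewrite addrK.
by exists (x - t) => //; rewrite subrK.
Qed.

Lemma translate0 (X : {set T}) : translate X 0 = X.
Proof. by apply/setP => x; rewrite mem_translate subr0. Qed.

Lemma translateD (X : {set T}) a b : translate (translate X a) b = translate X (a + b).
Proof. by apply/setP => x; rewrite !mem_translate -addrA -opprD [b + a]addrC. Qed.

Lemma translate3 (a b c t : T) : translate [set a; b; c] t = [set a + t; b + t; c + t].
Proof. rewrite /translate. rewrite !imsetU. rewrite !imset_set1. by []. Qed.

Lemma translate_sub (X Y : {set T}) t : X \subset Y -> translate X t \subset translate Y t.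
Proof. by move=> h; apply: imsetS. Qed.

Lemma set3E (x y z : T) : [set x; y; z] = x |: (y |: [set z]).
Proof. by rewrite setUA. Qed.

Lemma card_set3 (x y z : T) : x != y -> y != z -> z != x -> #|[set x; y; z]| = 3%N.
Proof.
move=> xy yz zx.
rewrite set3E !cardsU1 cards1 !inE negb_or xy yz [x == z]eq_sym (negbTE zx) /=. by [].
Qed.

Lemma card3P (X : {set T}) : #|X| = 3%N ->
  exists x y z, [/\ x != y, y != z, z != x & X = [set x; y; z]].
Proof.
move=> h; have : (2 < #|X|)%N by rewrite h.
case/card_gt2P => x [y [z [[xX yX zX] [xy yz zx]]]].
exists x, y, z; split => //; apply/esym/eqP; rewrite eqEcard h.
have -> : #|[set x; y; z]| = 3%N.
  rewrite set3E !cardsU1 cards1 !inE negb_or xy yz eq_sym zx /=. by [].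
by rewrite leqnn andbT; apply/subsetP => u; rewrite !inE => /orP [/orP [] | ] /eqP ->.
Qed.

Lemma card3le (x y z : T) : (#|[set x; y; z]| <= 3)%N.
Proof.
rewrite set3E !cardsU1 cards1.
by case: (x \in _); case: (y \in _).
Qed.

Lemma card3_eq (x y z : T) : #|[set x; y; z]| = 3%N -> [/\ x != y, y != z & z != x].
Proof.
rewrite set3E !cardsU1 cards1 !inE negb_or [z == x]eq_sym.
by case: (x == y); case: (x == z); case: (y == z).
Qed.

Variable B : {set {set T}}.
Hypotheses (hM : is_matroid_bases B) (hr : rank3 B) (hs : simple_matroid B)
  (ht : translation_invariant B).

Definition col (a b c : T) := [set a; b; c] \notin B.

Lemma colP a b c : reflect ([set a; b; c] \notin B) (col a b c).
Proof. exact: idP. Qed.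

Lemma col_deg1 a c : col a a c.
Proof.
apply/negP => /hr h; by case: (card3_eq h); rewrite eqxx.
Qed.

Lemma set3C1 (a b c : T) : [set a; b; c] = [set b; a; c].
Proof. apply/setP => u; rewrite !inE; by case: (u == a); case: (u == b). Qed.
Lemma set3C2 (a b c : T) : [set a; b; c] = [set a; c; b].
Proof. apply/setP => u; rewrite !inE; by case: (u == a); case: (u == b); case: (u == c). Qed.

Lemma col12 a b c : col a b c = col b a c.
Proof. by rewrite /col set3C1. Qed.
Lemma col23 a b c : col a b c = col a c b.
Proof. by rewrite /col set3C2. Qed.

Lemma col_deg2 a c : col a c a.
Proof. by rewrite col23 col_deg1. Qed.
Lemma col_deg3 a c : col c a a.
Proof. by rewrite col12 col_deg2. Qed.

Lemma col_translate a b c t : col (a + t) (b + t) (c + t) = col a b c.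
Proof.
rewrite /col -translate3; congr negb; apply/idP/idP; last exact: ht.
move=> /(ht (-t)); by rewrite translateD subrr translate0.
Qed.

Lemma indep_sub (X Y : {set T}) : X \subset Y -> independent B Y -> independent B X.
Proof. by move=> XY [Z ZB YZ]; exists Z => //; apply: subset_trans YZ. Qed.

Lemma indepP (X : {set T}) :
  independent B X <-> [exists Z, (Z \in B) && (X \subset Z)].
Proof.
split => [[Z ZB XZ]|/existsP [Z /andP [ZB XZ]]]; last by exists Z.
by apply/existsP; exists Z; rewrite ZB XZ.
Qed.

Lemma small_indep n : forall X : {set T}, (#|X| <= n)%N -> (n <= 2)%N -> independent B X.
Proof.
elim: n => [|n IH] X hX hn.
  case: (boolP [exists Z, (Z \in B) && (X \subset Z)]) => [/indepP //|hX2].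
  have : circuit B X.
    split; first by move/indepP; apply/negP.
    move=> D /proper_card; rewrite ltnNge; move: hX; rewrite leqn0 => /eqP ->.
    by [].
  by move/hs; rewrite leqNgt (leq_ltn_trans hX).
case: (boolP [exists Z, (Z \in B) && (X \subset Z)]) => [/indepP //|hX2].
have : circuit B X.
  split; first by move/indepP; apply/negP.
  move=> D /proper_card hD; apply: IH; last by apply: ltnW.
  by rewrite -ltnS (leq_trans hD).
by move/hs => h3; move: (leq_trans h3 (leq_trans hX hn)).
Qed.

Lemma indep2 a b : independent B [set a; b].
Proof.
apply: (@small_indep 2) => //.
by rewrite cardsU1 cards1; case: (a \in _).
Qed.

Lemma exch a b c d : a != b -> col a b c -> col a b d -> col a c d.
Proof.
move=> ab cabc cabd; apply/negP => J.
have [ac cd da] := card3_eq (hr J).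
case: (indep2 a b) => B1 B1B IB1.
have cB1 := hr B1B.
have cI : #|[set a; b]| = 2%N by rewrite cardsU1 cards1 inE (negbTE ab).
have : (0 < #|B1 :\: [set a; b]|)%N.
  by rewrite cardsD (setIidPr IB1) cB1 cI.
case/card_gt0P => e; rewrite inE => /andP [eI eB1].
move: eI; rewrite !inE negb_or => /andP [ea eb].
have B1E : B1 = [set a; b; e].
  apply/esym/eqP; rewrite eqEcard cB1.
  have -> : #|[set a; b; e]| = 3%N.
    by apply: card_set3; rewrite // eq_sym.
  rewrite leqnn andbT; apply/subsetP => u; rewrite !inE => /orP [/orP [] | ] /eqP ->//.
    by apply: (subsetP IB1); rewrite !inE eqxx.
  by apply: (subsetP IB1); rewrite !inE eqxx orbT.
case: (boolP (e \in [set a; c; d])) => eJ.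
  move: eJ; rewrite !inE (negbTE ea) /= => /orP [] /eqP ee.
    by move: cabc; rewrite /col -ee -B1E B1B.
  by move: cabd; rewrite /col -ee -B1E B1B.
have eD : e \in B1 :\: [set a; c; d] by rewrite inE eJ eB1.
case: hM => _ /(_ B1 _ B1B J e eD) [y].
rewrite inE => /andP [yB1 yJ].
have -> : B1 :\ e = [set a; b].
  apply/setP => u; rewrite B1E !inE.
  case: (eqVneq u e) => [-> | ue] /=; last by rewrite orbF.
  by rewrite (negbTE ea) (negbTE eb).
move: yJ yB1; rewrite B1E !inE => /orP [/orP [] | ] /eqP -> //; rewrite ?eqxx //=.
  by move: cabc; rewrite /col => /negbTE ->.
by move: cabd; rewrite /col => /negbTE ->.
Qed.

Definition line a b := [set x | col a b x].

Lemma line_l a b : a \in line a b.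
Proof. by rewrite inE col_deg2. Qed.
Lemma line_r a b : b \in line a b.
Proof. by rewrite inE col12 col_deg2. Qed.

Lemma line_swap a b : line a b = line b a.
Proof. by apply/setP => x; rewrite !inE col12. Qed.

Lemma line_step a b c : a != b -> a != c -> col a b c -> line a b = line a c.
Proof.
move=> ab ac h; apply/setP => x; rewrite !inE; apply/idP/idP => hx.
  exact: exch h hx.
by apply: exch ac _ hx; rewrite col23.
Qed.

Lemma line_eq a b c d : a != b -> c \in line a b -> d \in line a b -> c != d ->
  line c d = line a b.
Proof.
move=> ab; rewrite !inE => hc hd cd.
case: (eqVneq c a) => [ca | ca].
  subst c; apply/esym; exact: line_step.
have ac : a != c by rewrite eq_sym.
rewrite (line_step ab ac hc).
rewrite [line a c]line_swap; apply/esym; apply: line_step => //.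
have : d \in line a c by rewrite -(line_step ab ac hc) inE.
by rewrite inE col12.
Qed.

Lemma line_translate a b t : translate (line a b) t = line (a + t) (b + t).
Proof.
apply/setP => x; rewrite mem_translate !inE -(col_translate a b (x - t) t).
by rewrite subrK.
Qed.

End Gen.

Section ZZ.
Local Open Scope ring_scope.

Lemma Zp_gen (p : nat) (hp : prime p) (t : 'Z_p) : t != 0 -> forall y : 'Z_p, exists n, y = t *+ n.
Proof.
move=> t0 y.
have p1 : (1 < p)%N := prime_gt1 hp.
have tu : t \is a GRing.unit.
  rewrite -[t]natr_Zp unitZpE // prime_coprime //.
  apply/negP => /dvdn_leq.
  have tp : (val t < p)%N by apply: (leq_trans (ltn_ord t)); rewrite Zp_cast.
  have tpos : (0 < val t)%N.
    by rewrite lt0n; apply: contra t0 => /eqP h; apply/eqP/val_inj.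
  by move=> /(_ tpos); rewrite leqNgt tp.
by exists (val (t^-1 * y)); rewrite -mulr_natr natr_Zp mulrA divrr // mul1r.
Qed.

Section Main.
Variables (p : nat) (hp : prime p) (B : {set {set 'Z_p}}).
Hypotheses (hM : is_matroid_bases B) (hr : rank3 B) (hs : simple_matroid B)
  (ht : translation_invariant B).

Local Notation line := (Submission.line B).
Local Notation col := (Submission.col B).

Lemma stab a b t : a != b -> translate (line a b) t = line a b -> t != 0 -> False.
Proof.
move=> ab tL t0.
have hall : forall n, a + t *+ n \in line a b.
  elim => [|n IH]; first by rewrite mulr0n addr0 line_l.
  by rewrite -tL mem_translate mulrSr addrA addrK.
have hx : forall x, x \in line a b.
  move=> x; have [n hn] := Zp_gen hp t0 (x - a).
  by have -> : x = a + t *+ n by rewrite -hn addrC subrK.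
case: hM => /set0Pn [X XB] _.
have [x [y [z [xy yz zx XE]]]] := card3P (hr XB).
have : col x y z.
  by have := hx z; rewrite -(line_eq hM hr hs ab (hx x) (hx y) xy) inE.
by rewrite /Submission.col -XE XB.
Qed.

Definition canon (M : {set 'Z_p}) : bool :=
  [&& 0 \in M, (2 < #|M|)%N, [exists a, exists b, (a != b) && (M == line a b)] &
      [forall t, (0 \in translate M t) ==> (enum_rank M <= enum_rank (translate M t))%N]].

Lemma canon_line M : canon M -> forall c d, c \in M -> d \in M -> c != d -> M = line c d.
Proof.
case/and4P => _ _ /existsP [a /existsP [b /andP [ab /eqP ->]]] _ c d hc hd cd.
by rewrite (line_eq hM hr hs ab hc hd cd).
Qed.

Lemma canon_eq M N t : canon M -> canon N -> M = translate N t -> M = N.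
Proof.
move=> cM cN e.
have e2 : N = translate M (- t) by rewrite e translateD subrr translate0.
case/and4P: cM => M0 _ _ /forallP /(_ (-t)); rewrite -e2.
case/and4P: cN => N0 _ _ /forallP /(_ t); rewrite -e M0 N0 /= => h1 h2.
apply: enum_rank_inj; apply: val_inj => /=; apply/eqP; rewrite eqn_leq h1 h2.
by [].
Qed.

Definition Fam := [set M | canon M].
Definition kk := #|Fam|.
Definition SS (i : 'I_kk) : {set 'Z_p} := enum_val i.

Lemma SS_canon i : canon (SS i).
Proof. by have := enum_valP i; rewrite inE. Qed.

Lemma dds : distinct_difference_system SS.
Proof.
split.
- move=> i j x y z w xi yi zj wj xy zw e.
  pose t := x - z.
  have Si := canon_line (SS_canon i) xi yi xy.
  have Sj := canon_line (SS_canon j) zj wj zw.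
  have hy0 : y = x - (z - w) by rewrite -e opprB addrC subrK.
  have hy : y = w + t by rewrite hy0 /t addrCA opprB.
  have hx : x = z + t by rewrite /t addrC subrK.
  have eT : translate (SS j) t = SS i by rewrite Sj (line_translate ht) -hx -hy Si.
  have ij : SS i = SS j := canon_eq (SS_canon i) (SS_canon j) (esym eT).
  have ij' : i = j := enum_val_inj ij.
  subst j.
  have t0 : t = 0.
    apply/eqP; apply/negPn/negP => t0.
    by apply: (stab xy _ t0); rewrite -Si.
  by rewrite hx hy t0 !addr0.
- move=> i; case/and4P: (SS_canon i) => h0 h2 _ _; split => //.
  case/card_gt2P: h2 => x [y [z [[xi yi zi] [xy _ _]]]].
  case: (eqVneq x 0) => [x0|x0]; last by exists x.
  by exists y => //; rewrite -x0 eq_sym.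
- move=> i j ij; apply/setP => u; rewrite !inE.
  case: (eqVneq u 0) => [->|u0].
    by case/and4P: (SS_canon i) => ->; case/and4P: (SS_canon j) => ->.
  apply/negP => /andP [ui uj].
  case/and4P: (SS_canon i) => i0 _ _ _; case/and4P: (SS_canon j) => j0 _ _ _.
  have u0' : 0 != u by rewrite eq_sym.
  have := canon_line (SS_canon i) i0 ui u0'.
  rewrite -(canon_line (SS_canon j) j0 uj u0') => /enum_val_inj e.
  by move: ij; rewrite e eqxx.
Qed.

Lemma charB X : X \in B <->
      (#|X| = 3%N /\
       ~ (exists (i : 'I_kk) (U : {set 'Z_p}) (a : 'Z_p),
            U \subset SS i /\ X = translate U a)).
Proof.
split.
- move=> XB; split; first exact: hr.
  case=> i [U [a [US XE]]].
  have [x [y [z [xy yz zx XE']]]] := card3P (hr XB).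
  case/and4P: (SS_canon i) => _ _ /existsP [c /existsP [d /andP [cd /eqP Sid]]] _.
  have XL : X \subset line (c + a) (d + a).
    by rewrite -(line_translate ht) -Sid XE; apply: translate_sub.
  have cd' : c + a != d + a by rewrite (inj_eq (addIr a)).
  have hx : x \in X by rewrite XE' !inE eqxx.
  have hy' : y \in X by rewrite XE' !inE eqxx orbT.
  have hz : z \in X by rewrite XE' !inE eqxx orbT.
  have Lxy := line_eq hM hr hs cd' (subsetP XL x hx) (subsetP XL y hy') xy.
  have : z \in line x y by rewrite Lxy; apply: (subsetP XL).
  by rewrite inE /Submission.col -XE' XB.
- case=> h3 hno; case: (boolP (X \in B)) => // XnB; exfalso; apply: hno.
  have [x [y [z [xy yz zx XE]]]] := card3P h3.
  have cz : col x y z by rewrite /Submission.col -XE.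
  pose L := line x y.
  pose P := [pred t | 0 \in translate L t].
  have P0 : P (- x) by rewrite inE mem_translate sub0r opprK line_l.
  case: (arg_minnP (fun t => nat_of_ord (enum_rank (translate L t))) P0) => s Ps smin.
  pose M := translate L s.
  have ML : M = line (x + s) (y + s) by rewrite /M /L (line_translate ht).
  have cM : canon M.
    apply/and4P; split => //.
    + apply/card_gt2P; exists (x + s), (y + s), (z + s); split.
        rewrite ML !inE !(col_translate ht); split => //; [exact: (col_deg2 hr) | rewrite col12; exact: (col_deg2 hr)].
      by rewrite !(inj_eq (addIr s)) xy yz zx.
    + apply/existsP; exists (x + s); apply/existsP; exists (y + s).
      by rewrite (inj_eq (addIr s)) xy ML eqxx.
    + apply/forallP => u; apply/implyP => hu.
      rewrite /M translateD; apply: smin.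
      by rewrite inE -translateD.
  have MF : M \in Fam by rewrite inE.
  exists (enum_rank_in MF M), (translate X s), (- s).
  rewrite /SS enum_rankK_in //; split.
  + rewrite /M; apply: translate_sub; apply/subsetP => u.
    rewrite XE !inE => /orP [/orP [] | ] /eqP ->.
    * exact: (col_deg2 hr).
    * by rewrite col12 (col_deg2 hr).
    * exact: cz.
  + by rewrite translateD subrr translate0.
Qed.

End Main.
End ZZ.

Unset Implicit Arguments.

Theorem theorem3p28 (p : nat) (hp : prime p) (hodd : odd p)
  (B : {set {set 'Z_p}}) :
  is_matroid_bases B -> rank3 B -> simple_matroid B -> translation_invariant B ->
  exists (k : nat) (S : 'I_k -> {set 'Z_p}),
    distinct_difference_system S /\
    forall X : {set 'Z_p},
      X \in B <->
      (#|X| = 3%N /\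
       ~ (exists (i : 'I_k) (U : {set 'Z_p}) (a : 'Z_p),
            U \subset S i /\ X = translate U a)).
Proof.
move=> hM hr hs ht.
exists (kk B), (@SS p B); split.
- exact: (dds hp hM hr hs ht).
- move=> X; exact: (charB hM hr hs ht X).
Qed.
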